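(* Let $0<q<1$ and $m,n\in\mathbb N_0$. Then the Rodrigues-type formula $$H_{m,n}(z_1,z_2|q)=\frac{(1-1/q)^{m+n}q^{mn}}{(qz_1z_2;q)_\infty}\,D_{q^{-1},z_2}^m D_{q^{-1},z_1}^n\big((qz_1z_2;q)_\infty\big)$$ holds, and consequently the raising relations $$H_{m+1,n}(z_1,z_2|q)=q^n\frac{1-1/q}{(qz_1z_2;q)_\infty}D_{q^{-1},z_2}\Big((qz_1z_2;q)_\infty H_{m,n}(z_1,z_2|q)\Big),$$ $$H_{m,n+1}(z_1,z_2|q)=q^m\frac{1-1/q}{(qz_1z_2;q)_\infty}D_{q^{-1},z_1}\Big((qz_1z_2;q)_\infty H_{m,n}(z_1,z_2|q)\Big)$$ hold.
   Context: Let $0<q<1$. $(a;q)_n=\prod_{j=0}^{n-1}(1-aq^j)$, $(a;q)_\infty=\prod_{j\ge0}(1-aq^j)$, $\left[{m\atop k}\right]_q=\frac{(q;q)_m}{(q;q)_k(q;q)_{m-k}}$, $m\wedge n=\min\{m,n\}$. For $p\in\{q,q^{-1}\}$ the operator $D_{p,z}$ acts on functions of $z$ by $(D_{p,z}f)(z)=\frac{f(z)-f(pz)}{(1-p)z}$. The first $q$-$2D$-Hermite polynomials are $$H_{m,n}(z_1,z_2|q)=\sum_{k=0}^{m\wedge n}\left[{m\atop k}\right]_q\left[{n\atop k}\right]_q(-1)^kq^{\binom k2}(q;q)_k\,z_1^{m-k}z_2^{n-k}.$$ *)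

(* Defs.v *)
From Stdlib Require Import Reals ClassicalEpsilon.
Open Scope R_scope.

Definition Cx : Type := (R * R)%type.
Definition RtoC (x : R) : Cx := (x, 0).
Definition C0 : Cx := (0, 0).
Definition C1 : Cx := (1, 0).
Definition Cadd (z w : Cx) : Cx := (fst z + fst w, snd z + snd w).
Definition Copp (z : Cx) : Cx := (- fst z, - snd z).
Definition Csub (z w : Cx) : Cx := Cadd z (Copp w).
Definition Cmul (z w : Cx) : Cx :=
  (fst z * fst w - snd z * snd w, fst z * snd w + snd z * fst w).
Definition Cinv (z : Cx) : Cx :=
  let d := fst z * fst z + snd z * snd z in (fst z / d, - snd z / d).
Definition Cdiv (z w : Cx) : Cx := Cmul z (Cinv w).
Fixpoint Cpow (z : Cx) (n : nat) : Cx :=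
  match n with O => C1 | S k => Cmul z (Cpow z k) end.
Fixpoint Csum (f : nat -> Cx) (n : nat) : Cx :=
  match n with O => f O | S k => Cadd (Csum f k) (f (S k)) end.

Definition Ccv (u : nat -> Cx) (l : Cx) : Prop :=
  Un_cv (fun n => fst (u n)) (fst l) /\ Un_cv (fun n => snd (u n)) (snd l).

Fixpoint qpoch (a : Cx) (q : R) (n : nat) : Cx :=
  match n with
  | O => C1
  | S k => Cmul (qpoch a q k) (Csub C1 (Cmul a (RtoC (q ^ k))))
  end.

(** (a;q)_oo := lim_n (a;q)_n  (chosen by classical description; it
    exists for 0<q<1, and the junk value C0 is never used then). *)
Definition qpoch_inf (a : Cx) (q : R) : Cx :=
  epsilon (inhabits C0) (fun l => Ccv (fun n => qpoch a q n) l).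

Fixpoint qpochR (a q : R) (n : nat) : R :=
  match n with O => 1 | S k => qpochR a q k * (1 - a * q ^ k) end.
Definition qbinom (q : R) (m k : nat) : R :=
  qpochR q q m / (qpochR q q k * qpochR q q (m - k)).

Definition binom2 (k : nat) : nat := (k * (k - 1) / 2)%nat.

Definition H2 (m n : nat) (z1 z2 : Cx) (q : R) : Cx :=
  Csum (fun k =>
    Cmul (RtoC (qbinom q m k * qbinom q n k * (-1) ^ k * q ^ (binom2 k)
                * qpochR q q k))
         (Cmul (Cpow z1 (m - k)) (Cpow z2 (n - k))))
    (Nat.min m n).

Definition Dq (p : R) (f : Cx -> Cx) (z : Cx) : Cx :=
  Cdiv (Csub (f z) (f (Cmul (RtoC p) z))) (Cmul (RtoC (1 - p)) z).
Definition Dq1 (p : R) (F : Cx -> Cx -> Cx) : Cx -> Cx -> Cx :=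
  fun z1 z2 => Dq p (fun w => F w z2) z1.
Definition Dq2 (p : R) (F : Cx -> Cx -> Cx) : Cx -> Cx -> Cx :=
  fun z1 z2 => Dq p (fun w => F z1 w) z2.

Definition Wq (q : R) (z1 z2 : Cx) : Cx :=
  qpoch_inf (Cmul (RtoC q) (Cmul z1 z2)) q.

(* Main.v *)
From Stdlib Require Import Reals Lra Lia Field Ring ClassicalEpsilon.
Require Import Defs.
Open Scope R_scope.

Lemma Cring_theory : ring_theory C0 C1 Cadd Cmul Csub Copp (@eq Cx).
Proof.
  constructor; intros; repeat match goal with x : Cx |- _ => destruct x end;
  unfold Csub, C0, C1, Cadd, Cmul, Copp; simpl; f_equal; ring.
Qed.

Lemma Cfield_theory : field_theory C0 C1 Cadd Cmul Csub Copp Cdiv Cinv (@eq Cx).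
Proof.
  constructor.
  - exact Cring_theory.
  - unfold C1, C0; intro H; injection H; lra.
  - reflexivity.
  - intros [a b] H. assert (a*a+b*b <> 0).
    { intro H0. apply H. assert (a = 0) by nra. assert (b = 0) by nra. subst; reflexivity. }
    unfold Cinv, Cmul, C1; simpl; f_equal; field; auto.
Qed.
Add Field Cfield : Cfield_theory.


Definition Nrm (z : Cx) : R := Rabs (fst z) + Rabs (snd z).

Lemma Nrm_mul (z w : Cx) : Nrm (Cmul z w) <= Nrm z * Nrm w.
Proof.
  destruct z as [a b], w as [c d]; unfold Nrm, Cmul; simpl.
  assert (H1: Rabs (a*c - b*d) <= Rabs a * Rabs c + Rabs b * Rabs d).
  { unfold Rminus; eapply Rle_trans; [apply Rabs_triang|]; rewrite Rabs_Ropp, !Rabs_mult; lra. }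
  assert (H2: Rabs (a*d + b*c) <= Rabs a * Rabs d + Rabs b * Rabs c).
  { eapply Rle_trans; [apply Rabs_triang|]; rewrite !Rabs_mult; lra. }
  nra.
Qed.

Lemma Nrm_ge0 z : 0 <= Nrm z.
Proof. unfold Nrm; pose proof (Rabs_pos (fst z)); pose proof (Rabs_pos (snd z)); lra. Qed.

Lemma Nrm_RtoC r : Nrm (RtoC r) = Rabs r.
Proof. unfold Nrm, RtoC; simpl; rewrite Rabs_R0; ring. Qed.

Lemma Nrm_opp z : Nrm (Copp z) = Nrm z.
Proof. unfold Nrm, Copp; simpl; rewrite !Rabs_Ropp; ring. Qed.

Lemma Nrm_add z w : Nrm (Cadd z w) <= Nrm z + Nrm w.
Proof. unfold Nrm, Cadd; simpl.
  pose proof (Rabs_triang (fst z) (fst w)); pose proof (Rabs_triang (snd z) (snd w)); lra. Qed.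

Lemma Cauchy_geom (u : nat -> R) (C q : R) : 0 < q < 1 -> 0 <= C ->
  (forall n, Rabs (u (S n) - u n) <= C * q ^ n) -> Cauchy_crit u.
Proof.
  intros Hq HC Hd.
  assert (D: forall N k, Rabs (u (N + k)%nat - u N) <= C * q ^ N * (1 - q ^ k) / (1 - q)).
  { intros N k; induction k.
    - rewrite Nat.add_0_r; unfold Rminus; rewrite Rplus_opp_r, Rabs_R0; simpl.
      replace (C * q ^ N * (1 - 1) / (1 + - q)) with 0 by (field; lra); lra.
    - rewrite Nat.add_succ_r.
      eapply Rle_trans.
      { replace (u (S (N + k)) - u N) with ((u (S (N+k)) - u (N+k)%nat) + (u (N+k)%nat - u N)) by ring.
        apply Rabs_triang. }
      pose proof (Hd (N+k)%nat) as H. rewrite pow_add in H.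
      replace (C * q ^ N * (1 - q ^ S k) / (1 - q)) with
        (C * (q ^ N * q ^ k) + C * q ^ N * (1 - q ^ k) / (1 - q)) by (simpl; field; lra).
      lra. }
  assert (D': forall N k, Rabs (u (N + k)%nat - u N) <= C * q ^ N / (1 - q)).
  { intros N k. eapply Rle_trans; [apply D|].
    assert (0 <= q ^ k) by (apply pow_le; lra).
    assert (0 <= C * q ^ N) by (apply Rmult_le_pos; [lra| apply pow_le; lra]).
    unfold Rdiv. apply Rmult_le_compat_r. { left; apply Rinv_0_lt_compat; lra. }
    nra. }
  intros eps Heps.
  destruct (pow_lt_1_zero q ltac:(rewrite Rabs_pos_eq; lra) (eps * (1 - q) / (2 * (C + 1))))
    as [N HN].
  { apply Rdiv_lt_0_compat; nra. }
  exists N; intros n m Hn Hm; unfold R_dist.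
  specialize (HN N (le_n N)). rewrite Rabs_pos_eq in HN by (apply pow_le; lra).
  replace n with (N + (n - N))%nat by lia. replace m with (N + (m - N))%nat by lia.
  pose proof (D' N (n - N)%nat). pose proof (D' N (m - N)%nat).
  replace (u (N + (n - N))%nat - u (N + (m - N))%nat) with
    ((u (N + (n - N))%nat - u N) - (u (N + (m - N))%nat - u N)) by ring.
  eapply Rle_lt_trans. { unfold Rminus at 1. apply Rabs_triang. }
  rewrite Rabs_Ropp.
  assert (C * q ^ N / (1 - q) < eps / 2).
  { apply (Rmult_lt_reg_r (2 * (C+1) * / (1 - q))).
    { apply Rmult_lt_0_compat; [lra| apply Rinv_0_lt_compat; lra]. }
    assert (0 <= q ^ N) by (apply pow_le; lra).
    replace (eps / 2 * (2 * (C + 1) * / (1 - q))) with (eps * (C+1) / (1 - q)) by (field; lra).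
    replace (C * q ^ N / (1 - q) * (2 * (C + 1) * / (1 - q))) with
      (q ^ N * (2 * C * (C+1)) / ((1 - q) * (1 - q))) by (field; lra).
    apply (Rmult_lt_reg_r ((1 - q) * (1 - q))). nra.
    replace (eps * (C + 1) / (1 - q) * ((1 - q) * (1 - q))) with (eps * (C+1) * (1 - q)) by (field; lra).
    replace (q ^ N * (2 * C * (C + 1)) / ((1 - q) * (1 - q)) * ((1 - q) * (1 - q))) with
      (q ^ N * (2 * C * (C + 1))) by (field; lra).
    assert (q ^ N * (2 * (C + 1)) < eps * (1 - q)).
    { apply (Rmult_lt_reg_r (/ (2 * (C+1)))). apply Rinv_0_lt_compat; lra.
      replace (q ^ N * (2 * (C + 1)) * / (2 * (C + 1))) with (q ^ N) by (field; lra).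
      exact HN. }
    nra. }
  lra.
Qed.

Lemma RtoC_mul a b : RtoC (a * b) = Cmul (RtoC a) (RtoC b).
Proof. unfold RtoC, Cmul; simpl; f_equal; ring. Qed.
Lemma RtoC_add a b : RtoC (a + b) = Cadd (RtoC a) (RtoC b).
Proof. unfold RtoC, Cadd; simpl; f_equal; ring. Qed.
Lemma RtoC_opp a : RtoC (- a) = Copp (RtoC a).
Proof. unfold RtoC, Copp; simpl; f_equal; ring. Qed.
Lemma RtoC_sub a b : RtoC (a - b) = Csub (RtoC a) (RtoC b).
Proof. unfold Csub, RtoC, Cadd, Copp; simpl; f_equal; ring. Qed.
Lemma RtoC_1 : RtoC 1 = C1. Proof. reflexivity. Qed.
Lemma RtoC_0 : RtoC 0 = C0. Proof. reflexivity. Qed.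
Lemma RtoC_neq r : r <> 0 -> RtoC r <> C0.
Proof. intros H H1; apply H; injection H1; auto. Qed.

Lemma Nrm_fst z w : Rabs (fst z - fst w) <= Nrm (Csub z w).
Proof. unfold Nrm, Csub, Cadd, Copp; simpl. pose proof (Rabs_pos (snd z + - snd w)). unfold Rminus; lra. Qed.
Lemma Nrm_snd z w : Rabs (snd z - snd w) <= Nrm (Csub z w).
Proof. unfold Nrm, Csub, Cadd, Copp; simpl. pose proof (Rabs_pos (fst z + - fst w)). unfold Rminus; lra. Qed.

Section QP.
Variable q : R.
Hypothesis hq : 0 < q < 1.

Lemma qpoch_bound (a : Cx) n :
  Nrm (qpoch a q n) <= exp (Nrm a * (1 - q ^ n) / (1 - q)).
Proof.
  induction n.
  - simpl. replace (Nrm a * (1 - 1) / (1 - q)) with 0 by (field; lra).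
    rewrite exp_0. unfold Nrm, C1; simpl; rewrite Rabs_R1, Rabs_R0; lra.
  - simpl qpoch. eapply Rle_trans; [apply Nrm_mul|].
    assert (H1: Nrm (Csub C1 (Cmul a (RtoC (q ^ n)))) <= 1 + Nrm a * q ^ n).
    { unfold Csub. eapply Rle_trans; [apply Nrm_add|]. rewrite Nrm_opp.
      eapply Rle_trans. { apply Rplus_le_compat_l. apply Nrm_mul. }
      rewrite Nrm_RtoC, Rabs_pos_eq by (apply pow_le; lra).
      unfold Nrm, C1; simpl; rewrite Rabs_R1, Rabs_R0; lra. }
    assert (H2: 1 + Nrm a * q ^ n <= exp (Nrm a * q ^ n)) by apply exp_ineq1_le.
    replace (Nrm a * (1 - q ^ S n) / (1 - q)) with
      (Nrm a * (1 - q ^ n) / (1 - q) + Nrm a * q ^ n) by (simpl; field; lra).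
    rewrite exp_plus.
    apply Rmult_le_compat; [apply Nrm_ge0|apply Nrm_ge0|exact IHn|lra].
Qed.

Lemma qpoch_diff (a : Cx) n :
  Nrm (Csub (qpoch a q (S n)) (qpoch a q n)) <= exp (Nrm a / (1 - q)) * Nrm a * q ^ n.
Proof.
  replace (Csub (qpoch a q (S n)) (qpoch a q n)) with
    (Copp (Cmul (qpoch a q n) (Cmul a (RtoC (q ^ n))))) by (simpl; ring).
  rewrite Nrm_opp. eapply Rle_trans; [apply Nrm_mul|].
  assert (Nrm (Cmul a (RtoC (q ^ n))) <= Nrm a * q ^ n).
  { eapply Rle_trans; [apply Nrm_mul|]. rewrite Nrm_RtoC, Rabs_pos_eq by (apply pow_le; lra); lra. }
  assert (Nrm (qpoch a q n) <= exp (Nrm a / (1 - q))).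
  { eapply Rle_trans; [apply qpoch_bound|]. apply exp_le_3 || idtac.
    destruct (Req_dec (Nrm a * (1 - q ^ n) / (1 - q)) (Nrm a / (1 - q))) as [E|E].
    { rewrite E; lra. }
    left; apply exp_increasing.
    assert (0 < q ^ n) by (apply pow_lt; lra).
    pose proof (Nrm_ge0 a).
    unfold Rdiv. apply Rmult_le_compat_r in E || idtac.
    assert (Nrm a * (1 - q ^ n) <= Nrm a) by nra.
    assert (0 < / (1 - q)) by (apply Rinv_0_lt_compat; lra).
    assert (Nrm a * (1 - q ^ n) * / (1 - q) <= Nrm a * / (1 - q)) by nra.
    unfold Rdiv in E. lra. }
  rewrite Rmult_assoc.
  apply Rmult_le_compat; [apply Nrm_ge0|apply Nrm_ge0|assumption|assumption].
Qed.

Lemma Ccv_ex (a : Cx) : exists l, Ccv (fun n => qpoch a q n) l.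
Proof.
  set (C := exp (Nrm a / (1 - q)) * Nrm a).
  assert (HC: 0 <= C) by (apply Rmult_le_pos; [left; apply exp_pos| apply Nrm_ge0]).
  assert (H1: Cauchy_crit (fun n => fst (qpoch a q n))).
  { apply (Cauchy_geom _ C q hq HC). intro n. eapply Rle_trans; [|apply qpoch_diff].
    apply Nrm_fst. }
  assert (H2: Cauchy_crit (fun n => snd (qpoch a q n))).
  { apply (Cauchy_geom _ C q hq HC). intro n. eapply Rle_trans; [|apply qpoch_diff].
    apply Nrm_snd. }
  destruct (R_complete _ H1) as [l1 Hl1], (R_complete _ H2) as [l2 Hl2].
  exists (l1, l2); split; auto.
Qed.
End QP.

Lemma Ccv_uniq u l1 l2 : Ccv u l1 -> Ccv u l2 -> l1 = l2.
Proof. intros [A B] [C D]. destruct l1, l2; simpl in *. f_equal; eapply UL_sequence; eauto. Qed.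

Lemma Un_cv_ext u v l : (forall n, u n = v n) -> Un_cv u l -> Un_cv v l.
Proof. intros E H eps He; destruct (H eps He) as [N HN]; exists N; intros n Hn; rewrite <- E; auto. Qed.

Lemma Un_cv_shift u l : Un_cv u l -> Un_cv (fun n => u (S n)) l.
Proof. intros H eps He; destruct (H eps He) as [N HN]; exists N; intros n Hn; apply HN; lia. Qed.

Lemma Un_cv_const c : Un_cv (fun _ => c) c.
Proof. intros eps He; exists 0%nat; intros; unfold R_dist; rewrite Rminus_diag, Rabs_R0; auto. Qed.

Lemma Ccv_cmul c u l : Ccv u l -> Ccv (fun n => Cmul c (u n)) (Cmul c l).
Proof. intros [A B]; split; simpl.
  - apply (CV_minus (fun n => fst c * fst (u n)) (fun n => snd c * snd (u n)));
    apply CV_mult; auto; apply Un_cv_const.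
  - apply (CV_plus (fun n => fst c * snd (u n)) (fun n => snd c * fst (u n)));
    apply CV_mult; auto; apply Un_cv_const.
Qed.

Lemma qpoch_inf_spec q a : 0 < q < 1 -> Ccv (fun n => qpoch a q n) (qpoch_inf a q).
Proof. intro hq. unfold qpoch_inf. apply epsilon_spec. apply Ccv_ex; auto. Qed.

Lemma qpoch_S x q n : qpoch x q (S n) = Cmul (Csub C1 x) (qpoch (Cmul (RtoC q) x) q n).
Proof.
  induction n.
  - simpl. rewrite RtoC_1. ring.
  - change (qpoch x q (S (S n))) with (Cmul (qpoch x q (S n)) (Csub C1 (Cmul x (RtoC (q ^ S n))))).
    rewrite IHn.
    change (qpoch (Cmul (RtoC q) x) q (S n)) with
      (Cmul (qpoch (Cmul (RtoC q) x) q n) (Csub C1 (Cmul (Cmul (RtoC q) x) (RtoC (q ^ n))))).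
    change (q ^ S n) with (q * q ^ n). rewrite RtoC_mul. ring.
Qed.

Lemma qpoch_inf_fe q x : 0 < q < 1 ->
  qpoch_inf x q = Cmul (Csub C1 x) (qpoch_inf (Cmul (RtoC q) x) q).
Proof.
  intro hq. apply (Ccv_uniq (fun n => qpoch x q (S n))).
  - destruct (qpoch_inf_spec q x hq) as [A B]; split; apply (Un_cv_shift (fun n => _ (qpoch x q n))); auto.
  - destruct (Ccv_cmul (Csub C1 x) _ _ (qpoch_inf_spec q (Cmul (RtoC q) x) hq)) as [A B].
    split; eapply Un_cv_ext; [| exact A | | exact B]; intro n; rewrite qpoch_S; reflexivity.
Qed.

Lemma Csum_ext f g N : (forall k, (k <= N)%nat -> f k = g k) -> Csum f N = Csum g N.
Proof. induction N; intros E; simpl. apply E; lia. rewrite IHN by (intros; apply E; lia). rewrite E by lia; auto. Qed.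
Lemma Csum_add f g N : Csum (fun k => Cadd (f k) (g k)) N = Cadd (Csum f N) (Csum g N).
Proof. induction N; simpl; auto. rewrite IHN; ring. Qed.
Lemma Csum_cmul c f N : Csum (fun k => Cmul c (f k)) N = Cmul c (Csum f N).
Proof. induction N; simpl; auto. rewrite IHN; ring. Qed.
Lemma Csum_shift f N : Csum f (S N) = Cadd (f O) (Csum (fun k => f (S k)) N).
Proof. induction N. simpl; auto. change (Csum f (S (S N))) with (Cadd (Csum f (S N)) (f (S (S N)))).
  rewrite IHN; simpl; ring. Qed.
Lemma Csum_pad f M N : (forall k, (M < k)%nat -> f k = C0) -> (M <= N)%nat -> Csum f N = Csum f M.
Proof. intros Z H; induction H; auto. simpl. rewrite IHle, Z by lia. ring. Qed.

Lemma binom2_S k : binom2 (S k) = (binom2 k + k)%nat.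
Proof. unfold binom2. replace (S k * (S k - 1))%nat with (k * (k - 1) + k * 2)%nat by (destruct k; simpl; nia).
  rewrite Nat.div_add by lia. reflexivity. Qed.

Lemma Cpow_mul z w n : Cpow (Cmul z w) n = Cmul (Cpow z n) (Cpow w n).
Proof. induction n; simpl. unfold C1, Cmul; simpl; f_equal; ring. rewrite IHn; ring. Qed.
Lemma Cpow_RtoC r n : Cpow (RtoC r) n = RtoC (r ^ n).
Proof. induction n; simpl; auto. rewrite IHn, RtoC_mul; auto. Qed.

Section Coef.
Variable q : R.
Hypothesis hq : 0 < q < 1.
Local Notation Q := (qpochR q q).

Lemma pow_bd k : 0 < q ^ k <= 1.
Proof. induction k; simpl; [lra|]. split; [nra|]. nra. Qed.
Lemma fac_pos k : 0 < 1 - q * q ^ k.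
Proof. pose proof (pow_bd k); nra. Qed.
Lemma Q_pos k : 0 < Q k.
Proof. induction k; simpl; [lra|]. pose proof (fac_pos k). nra. Qed.
Lemma QS k : Q (S k) = Q k * (1 - q * q ^ k).
Proof. reflexivity. Qed.

Definition acoef m n k : R := Q m * Q n * (-1) ^ k * q ^ (binom2 k) / (Q (m - k) * Q (n - k) * Q k).
Definition hc m n k : R := if andb (Nat.leb k m) (Nat.leb k n) then acoef m n k else 0.

Lemma hc_eq m n k : (k <= m)%nat -> (k <= n)%nat -> hc m n k = acoef m n k.
Proof. intros; unfold hc. rewrite (proj2 (Nat.leb_le _ _) H), (proj2 (Nat.leb_le _ _) H0). auto. Qed.
Lemma hc_zero m n k : (m < k \/ n < k)%nat -> hc m n k = 0.
Proof. intros H; unfold hc.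
  destruct H as [H|H]; [rewrite (proj2 (Nat.leb_gt _ _) H) | rewrite (proj2 (Nat.leb_gt _ _) H); destruct (Nat.leb k m)]; auto. Qed.

Lemma hc_0 m n : hc m n 0 = 1.
Proof. rewrite hc_eq by lia. unfold acoef. rewrite !Nat.sub_0_r. simpl.
  pose proof (Q_pos m); pose proof (Q_pos n). field. lra. Qed.

Lemma I1 m n k : (S k <= m)%nat -> (S k <= n)%nat ->
  acoef (S m) n (S k) = acoef m n k * (q ^ n - q ^ k) + acoef m n (S k) * q ^ (S k).
Proof.
  intros H1 H2.
  destruct (Nat.le_exists_sub _ _ H1) as [r [Er _]]. destruct (Nat.le_exists_sub _ _ H2) as [s [Es _]].
  subst m n. unfold acoef.
  replace (S (r + S k) - S k)%nat with (S r) by lia.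
  replace (s + S k - S k)%nat with s by lia.
  replace (r + S k - k)%nat with (S r) by lia.
  replace (s + S k - k)%nat with (S s) by lia.
  replace (r + S k - S k)%nat with r by lia.
  rewrite binom2_S, pow_add.
  rewrite (QS (r + S k)), (QS r), (QS s), (QS k).
  rewrite !pow_add. change (q ^ S k) with (q * q ^ k). change ((-1) ^ S k) with (-1 * (-1) ^ k).
  pose proof (Q_pos r); pose proof (Q_pos s); pose proof (Q_pos k); pose proof (Q_pos (r + S k));
  pose proof (Q_pos (s + S k)); pose proof (fac_pos r); pose proof (fac_pos s); pose proof (fac_pos k).
  pose proof (fac_pos (r + S k)). rewrite pow_add in H9. change (q ^ S k) with (q * q ^ k) in H9.
  field. repeat split; lra.
Qed.

Lemma I2 m n : (m < n)%nat ->
  acoef (S m) n (S m) = acoef m n m * (q ^ n - q ^ m).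
Proof.
  intros H1. destruct (Nat.le_exists_sub _ _ H1) as [s [Es _]]. subst n. unfold acoef.
  replace (S m - S m)%nat with 0%nat by lia.
  replace (s + S m - S m)%nat with s by lia.
  replace (m - m)%nat with 0%nat by lia.
  replace (s + S m - m)%nat with (S s) by lia.
  rewrite binom2_S, pow_add. rewrite (QS m), (QS s). rewrite !pow_add.
  change (q ^ S m) with (q * q ^ m). change ((-1) ^ S m) with (-1 * (-1) ^ m).
  pose proof (Q_pos m); pose proof (Q_pos s); pose proof (Q_pos (s + S m));
  pose proof (fac_pos s); pose proof (fac_pos m).
  change (Q 0) with 1. field. repeat split; lra.
Qed.

End Coef.

Lemma Csum_lin c w f g N :
  Csum (fun k => Cmul c (Csub (f k) (Cmul w (g k)))) N = Cmul c (Csub (Csum f N) (Cmul w (Csum g N))).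
Proof. induction N; simpl; auto. rewrite IHN; ring. Qed.

Section Raise.
Variable q : R.
Hypothesis hq : 0 < q < 1.

Lemma H2_pad m n z1 z2 N : (Nat.min m n <= N)%nat ->
  H2 m n z1 z2 q = Csum (fun k => Cmul (RtoC (hc q m n k)) (Cmul (Cpow z1 (m - k)) (Cpow z2 (n - k)))) N.
Proof.
  intro HN. rewrite (Csum_pad _ (Nat.min m n) N); auto.
  - unfold H2. apply Csum_ext. intros k Hk. rewrite hc_eq by lia. f_equal. f_equal.
    unfold qbinom, acoef.
    pose proof (Q_pos q hq k); pose proof (Q_pos q hq (m - k)); pose proof (Q_pos q hq (n - k));
    pose proof (Q_pos q hq m); pose proof (Q_pos q hq n).
    field. repeat split; lra.
  - intros k Hk. rewrite hc_zero by lia. rewrite RtoC_0. ring.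
Qed.

Lemma raise2 m n z1 z2 :
  Cmul z2 (H2 (S m) n z1 z2 q) =
  Cmul (RtoC (q ^ n)) (Csub (H2 m n z1 z2 q)
     (Cmul (Csub C1 (Cmul z1 z2)) (H2 m n z1 (Cmul (RtoC (1/q)) z2) q))).
Proof.
  rewrite (H2_pad (S m) n z1 z2 (S (S n))) by lia.
  rewrite (H2_pad m n z1 z2 (S n)) by lia.
  rewrite (H2_pad m n z1 (Cmul (RtoC (1/q)) z2) (S n)) by lia.
  set (U := fun k => Cmul (RtoC (hc q m n k * (q ^ n - q ^ k))) (Cmul (Cpow z1 (m - k)) (Cpow z2 (n - k)))).
  set (V := fun k => Cmul (RtoC (hc q m n k * q ^ k)) (Cmul (Cpow z1 (S (m - k))) (Cpow z2 (S (n - k))))).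
  transitivity (Csum (fun j => Cadd (match j with O => C0 | S k => U k end) (V j)) (S (S n))).
  - rewrite <- Csum_cmul. apply Csum_ext. intros j Hj.
    destruct j as [|k].
    + rewrite !Nat.sub_0_r. unfold V. rewrite !Nat.sub_0_r, hc_0, hc_0 by auto.
      replace (1 * q ^ 0) with 1 by (simpl; ring). rewrite RtoC_1.
      change (Cpow z2 (S n)) with (Cmul z2 (Cpow z2 n)). ring.
    + unfold U, V.
      replace (S m - S k)%nat with (m - k)%nat by lia.
      destruct (Compare_dec.le_lt_dec (S k) n) as [Hn|Hn].
      * assert (Ez2 : Cpow z2 (S (n - S k)) = Cpow z2 (n - k)) by (f_equal; lia).
        assert (Ez2' : Cpow z2 (n - k) = Cmul z2 (Cpow z2 (n - S k))).
        { rewrite <- Ez2; reflexivity. }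
        destruct (Compare_dec.le_lt_dec (S k) m) as [Hm|Hm].
        -- assert (Ez1 : Cpow z1 (S (m - S k)) = Cpow z1 (m - k)) by (f_equal; lia).
           rewrite Ez1, Ez2, Ez2'.
           rewrite !hc_eq by lia. rewrite (I1 q hq) by lia. rewrite RtoC_add. ring.
        -- rewrite (hc_zero q m n (S k)) by lia. rewrite Rmult_0_l, RtoC_0.
           destruct (Nat.eq_dec k m) as [->|Hkm].
           ++ rewrite !hc_eq by lia. rewrite (I2 q hq) by lia. rewrite Ez2'. ring.
           ++ rewrite !hc_zero by lia. rewrite Rmult_0_l, RtoC_0. ring.
      * rewrite (hc_zero q m n (S k)) by lia. rewrite (hc_zero q (S m) n (S k)) by lia.
        assert (Z : hc q m n k * (q ^ n - q ^ k) = 0).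
        { destruct (Nat.eq_dec k n) as [->|Hkn]. ring. rewrite hc_zero by lia; ring. }
        rewrite Z, Rmult_0_l, RtoC_0. ring.
  - rewrite Csum_add, Csum_shift.
    rewrite (Csum_pad V (S n) (S (S n))).
    2: { intros k Hk; unfold V; rewrite hc_zero by lia; rewrite Rmult_0_l, RtoC_0; ring. }
    2: lia.
    assert (Cz : forall x, Cadd C0 x = x) by (intros; ring).
    rewrite Cz, <- Csum_add.
    rewrite <- Csum_lin. apply Csum_ext. intros k Hk.
    destruct (Compare_dec.le_lt_dec k n) as [Hn|Hn].
    + assert (E : Cmul (RtoC (q ^ n)) (RtoC ((1/q) ^ (n - k))) = RtoC (q ^ k)).
      { rewrite <- RtoC_mul. f_equal. replace n with (k + (n - k))%nat at 1 by lia.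
        rewrite pow_add, Rmult_assoc, <- Rpow_mult_distr.
        replace (q * (1 / q)) with 1 by (field; lra). rewrite pow1; ring. }
      unfold U, V. rewrite Cpow_mul, Cpow_RtoC. rewrite !RtoC_mul, RtoC_sub, <- E.
      change (Cpow z1 (S (m - k))) with (Cmul z1 (Cpow z1 (m - k))).
      change (Cpow z2 (S (n - k))) with (Cmul z2 (Cpow z2 (n - k))).
      ring.
    + unfold U, V. rewrite hc_zero by lia. rewrite !Rmult_0_l, RtoC_0. ring.
Qed.
End Raise.

Lemma H2_sym m n z1 z2 q : H2 m n z1 z2 q = H2 n m z2 z1 q.
Proof. unfold H2. rewrite Nat.min_comm. apply Csum_ext; intros. apply f_equal2; [f_equal; ring | ring]. Qed.

Lemma RtoC_div a b : b <> 0 -> RtoC (a / b) = Cdiv (RtoC a) (RtoC b).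
Proof. intros. unfold RtoC, Cdiv, Cmul, Cinv; simpl; f_equal; field; auto. Qed.

Section Main.
Variable q : R.
Hypothesis hq : 0 < q < 1.

Lemma raise1 m n z1 z2 :
  Cmul z1 (H2 m (S n) z1 z2 q) =
  Cmul (RtoC (q ^ m)) (Csub (H2 m n z1 z2 q)
     (Cmul (Csub C1 (Cmul z1 z2)) (H2 m n (Cmul (RtoC (1/q)) z1) z2 q))).
Proof.
  rewrite (H2_sym m (S n) z1 z2), (H2_sym m n z1 z2), (H2_sym m n (Cmul (RtoC (1/q)) z1) z2).
  rewrite (raise2 q hq n m z2 z1). replace (Cmul z2 z1) with (Cmul z1 z2) by ring. reflexivity.
Qed.

Lemma Hqp : Cmul (RtoC q) (RtoC (1/q)) = C1.
Proof. rewrite <- RtoC_mul. rewrite <- RtoC_1. f_equal. field. lra. Qed.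

Lemma W_fe2 z1 z2 : Wq q z1 (Cmul (RtoC (1/q)) z2) = Cmul (Csub C1 (Cmul z1 z2)) (Wq q z1 z2).
Proof.
  unfold Wq. replace (Cmul (RtoC q) (Cmul z1 (Cmul (RtoC (1/q)) z2))) with (Cmul z1 z2).
  - apply qpoch_inf_fe; auto.
  - replace (Cmul (RtoC q) (Cmul z1 (Cmul (RtoC (1/q)) z2))) with
      (Cmul (Cmul (RtoC q) (RtoC (1/q))) (Cmul z1 z2)) by ring. rewrite Hqp; ring.
Qed.

Lemma W_fe1 z1 z2 : Wq q (Cmul (RtoC (1/q)) z1) z2 = Cmul (Csub C1 (Cmul z1 z2)) (Wq q z1 z2).
Proof.
  unfold Wq. replace (Cmul (RtoC q) (Cmul (Cmul (RtoC (1/q)) z1) z2)) with (Cmul z1 z2).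
  - apply qpoch_inf_fe; auto.
  - replace (Cmul (RtoC q) (Cmul (Cmul (RtoC (1/q)) z1) z2)) with
      (Cmul (Cmul (RtoC q) (RtoC (1/q))) (Cmul z1 z2)) by ring. rewrite Hqp; ring.
Qed.

Lemma pz_neq z : z <> C0 -> Cmul (RtoC (1/q)) z <> C0.
Proof. intros hz H. apply hz.
  transitivity (Cmul (Cmul (RtoC q) (RtoC (1/q))) z). rewrite Hqp; ring.
  replace (Cmul (Cmul (RtoC q) (RtoC (1 / q))) z) with (Cmul (RtoC q) (Cmul (RtoC (1 / q)) z)) by ring.
  rewrite H; ring.
Qed.

Lemma p1_neq : 1 - 1/q <> 0.
Proof. intro H. assert (1/q = 1) by lra. assert (q = 1) by (apply (f_equal (fun x => / x)) in H0; rewrite Rinv_1 in H0; unfold Rdiv in H0; rewrite Rmult_1_l, Rinv_inv in H0; auto). lra. Qed.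

Lemma L1 n : forall z1 z2, z1 <> C0 -> z2 <> C0 ->
  Nat.iter n (Dq1 (1/q)) (Wq q) z1 z2 = Cmul (Wq q z1 z2) (Cmul (RtoC (/ (1 - 1/q) ^ n)) (Cpow z2 n)).
Proof.
  pose proof p1_neq as Hp.
  induction n; intros z1 z2 h1 h2.
  - simpl. replace (/ 1) with 1 by field. rewrite RtoC_1. ring.
  - change (Nat.iter (S n) (Dq1 (1/q)) (Wq q)) with (Dq1 (1/q) (Nat.iter n (Dq1 (1/q)) (Wq q))).
    unfold Dq1, Dq. rewrite IHn, IHn by auto using pz_neq. rewrite W_fe1.
    replace (/ (1 - 1/q) ^ S n) with (/ (1 - 1/q) ^ n / (1 - 1/q)) by (simpl; field; repeat split; try assumption; try (apply pow_nonzero; assumption); lra).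
    rewrite RtoC_div by auto.
    change (Cpow z2 (S n)) with (Cmul z2 (Cpow z2 n)).
    field. split; auto. apply RtoC_neq; auto.
Qed.

Lemma H2_0n n z1 z2 : H2 0 n z1 z2 q = Cpow z2 n.
Proof.
  unfold H2. simpl. rewrite Nat.sub_0_r.
  replace (qbinom q 0 0 * qbinom q n 0 * 1 * 1 * 1) with 1.
  - rewrite RtoC_1. ring.
  - unfold qbinom. simpl. rewrite Nat.sub_0_r.
    pose proof (Q_pos q hq n). field. lra.
Qed.

Definition K m n := / ((1 - 1/q) ^ (m + n) * q ^ (m * n)).

Lemma K_nz m n : (1 - 1/q) ^ (m + n) * q ^ (m * n) <> 0.
Proof. apply Rmult_integral_contrapositive; split; apply pow_nonzero; [apply p1_neq| lra]. Qed.

Lemma H2_S m n z1 z2 : z2 <> C0 ->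
  H2 (S m) n z1 z2 q = Cdiv (Cmul (RtoC (q ^ n)) (Csub (H2 m n z1 z2 q)
     (Cmul (Csub C1 (Cmul z1 z2)) (H2 m n z1 (Cmul (RtoC (1/q)) z2) q)))) z2.
Proof. intros h. rewrite <- raise2 by auto. field. auto. Qed.

Lemma H2_S' m n z1 z2 : z1 <> C0 ->
  H2 m (S n) z1 z2 q = Cdiv (Cmul (RtoC (q ^ m)) (Csub (H2 m n z1 z2 q)
     (Cmul (Csub C1 (Cmul z1 z2)) (H2 m n (Cmul (RtoC (1/q)) z1) z2 q)))) z1.
Proof. intros h. rewrite <- raise1 by auto. field. auto. Qed.

Lemma L2 m n : forall z1 z2, z1 <> C0 -> z2 <> C0 ->
  Nat.iter m (Dq2 (1/q)) (Nat.iter n (Dq1 (1/q)) (Wq q)) z1 z2 =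
  Cmul (Wq q z1 z2) (Cmul (RtoC (K m n)) (H2 m n z1 z2 q)).
Proof.
  pose proof p1_neq as Hp.
  induction m; intros z1 z2 h1 h2.
  - simpl Nat.iter. rewrite L1 by auto. rewrite H2_0n. unfold K. simpl.
    replace (/ ((1 - 1/q) ^ n * 1)) with (/ (1 - 1/q) ^ n) by (field; apply pow_nonzero; auto). auto.
  - change (Nat.iter (S m) (Dq2 (1/q)) (Nat.iter n (Dq1 (1/q)) (Wq q))) with
      (Dq2 (1/q) (Nat.iter m (Dq2 (1/q)) (Nat.iter n (Dq1 (1/q)) (Wq q)))).
    unfold Dq2, Dq. rewrite IHm, IHm by auto using pz_neq. rewrite W_fe2.
    rewrite (H2_S m n z1 z2) by auto.
    replace (K (S m) n) with (K m n / ((1 - 1/q) * q ^ n)).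
    2: { unfold K. simpl. rewrite (pow_add q n (m*n)). remember (1 - 1/q) as c.
         pose proof (pow_nonzero c (m+n) Hp). pose proof (pow_nonzero q n ltac:(lra)).
         pose proof (pow_nonzero q (m*n) ltac:(lra)). field. repeat split; auto. }
    assert (q ^ n <> 0) by (apply pow_nonzero; lra).
    rewrite (RtoC_div (K m n)) by (apply Rmult_integral_contrapositive; split; auto).
    rewrite RtoC_mul.
    field. repeat split; auto; apply RtoC_neq; auto.
Qed.
End Main.

Theorem theorem3p2 (q : R) (hq0 : 0 < q) (hq1 : q < 1) (m n : nat) (z1 z2 : Cx)
  (hz1 : z1 <> C0) (hz2 : z2 <> C0) (hW : Wq q z1 z2 <> C0) :
  H2 m n z1 z2 q =
    Cmul (RtoC ((1 - 1 / q) ^ (m + n) * q ^ (m * n)))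
      (Cdiv (Nat.iter m (Dq2 (1 / q)) (Nat.iter n (Dq1 (1 / q)) (Wq q)) z1 z2)
            (Wq q z1 z2))
  /\
  H2 (S m) n z1 z2 q =
    Cmul (RtoC (q ^ n * (1 - 1 / q)))
      (Cdiv (Dq2 (1 / q) (fun w1 w2 => Cmul (Wq q w1 w2) (H2 m n w1 w2 q)) z1 z2)
            (Wq q z1 z2))
  /\
  H2 m (S n) z1 z2 q =
    Cmul (RtoC (q ^ m * (1 - 1 / q)))
      (Cdiv (Dq1 (1 / q) (fun w1 w2 => Cmul (Wq q w1 w2) (H2 m n w1 w2 q)) z1 z2)
            (Wq q z1 z2)).
Proof.
  assert (hq : 0 < q < 1) by lra.
  pose proof (p1_neq q hq) as Hp.
  assert (Hqn : forall k, q ^ k <> 0) by (intro; apply pow_nonzero; lra).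
  split; [|split].
  - rewrite (L2 q hq) by auto.
    assert (E : Cmul (RtoC ((1 - 1 / q) ^ (m + n) * q ^ (m * n))) (RtoC (K q m n)) = C1).
    { rewrite <- RtoC_mul, <- RtoC_1. f_equal. unfold K. field. split; apply pow_nonzero; auto; lra. }
    transitivity (Cmul (Cmul (RtoC ((1 - 1 / q) ^ (m + n) * q ^ (m * n))) (RtoC (K q m n))) (H2 m n z1 z2 q)).
    + rewrite E; ring.
    + field. auto.
  - unfold Dq2, Dq. rewrite (W_fe2 q hq). rewrite (H2_S q hq m n z1 z2) by auto.
    rewrite !RtoC_mul.
    field. repeat split; auto; apply RtoC_neq; auto.
  - unfold Dq1, Dq. rewrite (W_fe1 q hq). rewrite (H2_S' q hq m n z1 z2) by auto.
    rewrite !RtoC_mul.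
    field. repeat split; auto; apply RtoC_neq; auto.
Qed.
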